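(* Let $Q_1=(Q_{1,1},\ldots,Q_{1,d})$ and $Q_2=(Q_{2,1},\ldots,Q_{2,d})$ be the expected relative abundance vectors of two populations. (i) If $I_{0,1},I_{0,2}\subset[d]$ are two reference sets (with constants $b_1,b_2>0$ respectively) satisfying $|I_{0,1}|>d/2$ and $|I_{0,2}|>d/2$, then the reference-based null and alternative hypotheses defined using $I_{0,1}$ coincide with those defined using $I_{0,2}$; that is, the hypotheses are well defined when the reference set is assumed to have more than $d/2$ elements. (ii) In contrast, there exist instances $(Q_1,Q_2)$ with two reference sets $I_{0,1}$, $I_{0,2}$ satisfying $|I_{0,1}|,|I_{0,2}|\le d/2$ such that the null hypotheses defined by $I_{0,1}$ and by $I_{0,2}$ contradict each other (a component is null under one reference set and non-null under the other).
   Context: There are $d$ components, $[d]=\{1,\ldots,d\}$. For two populations $\pi_1,\pi_2$ of absolute abundance vectors $A=(A_1,\ldots,A_d)\in[0,\infty)^d$, the relative abundance is $P_i=A_i/\sum_{i'=1}^dA_{i'}$ and $Q_{k,i}=\mathbb{E}_{\pi_k}(P_i)$ for $k=1,2$. A subset $I_0\subset[d]$ is called a reference set if there is a constant $b>0$ with $Q_{1,i}=bQ_{2,i}$ for all $i\in I_0$. Given a reference set $I_0$, the reference-based hypotheses for component $i$ are $H_{i,0}: Q_{1,i}/\sum_{i'\in I_0}Q_{1,i'}=Q_{2,i}/\sum_{i'\in I_0}Q_{2,i'}$ versus $H_{i,1}: Q_{1,i}/\sum_{i'\in I_0}Q_{1,i'}\ne Q_{2,i}/\sum_{i'\in I_0}Q_{2,i'}$.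 *)

(* Defs.v *)
From mathcomp Require Import all_boot all_order all_algebra.
From mathcomp Require Import reals.
Set Implicit Arguments. Unset Strict Implicit. Unset Printing Implicit Defensive.
Import Order.TTheory GRing.Theory Num.Theory.
Local Open Scope ring_scope.

Definition rel_abund (R : realType) (d : nat) (Q : 'I_d -> R) : Prop :=
  (forall i, 0 < Q i) /\ \sum_(i < d) Q i = 1.

Definition reference_set (R : realType) (d : nat) (Q1 Q2 : 'I_d -> R)
  (I0 : {set 'I_d}) : Prop :=
  exists b : R, 0 < b /\ forall i, i \in I0 -> Q1 i = b * Q2 i.

Definition null_hyp (R : realType) (d : nat) (Q1 Q2 : 'I_d -> R)
  (I0 : {set 'I_d}) (i : 'I_d) : Prop :=
  Q1 i / (\sum_(j in I0) Q1 j) = Q2 i / (\sum_(j in I0) Q2 j).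

Definition alt_hyp (R : realType) (d : nat) (Q1 Q2 : 'I_d -> R)
  (I0 : {set 'I_d}) (i : 'I_d) : Prop :=
  Q1 i / (\sum_(j in I0) Q1 j) <> Q2 i / (\sum_(j in I0) Q2 j).

(* Main.v *)
Require Import Defs.
From mathcomp Require Import all_boot all_order all_algebra.
From mathcomp Require Import reals.
From mathcomp Require Import zify ring lra.
Import Order.TTheory GRing.Theory Num.Theory.
Local Open Scope ring_scope.

Lemma key (R : realType) (x y b S : R) : 0 < b -> 0 < S ->
  (x / (b * S) = y / S) <-> x = b * y.
Proof.
move=> hb hS; have hb0 : b != 0 by rewrite gt_eqF.
have hS0 : S != 0 by rewrite gt_eqF.
split => [h|->].
- have := congr1 (fun z => z * (b * S)) h => /=.
  rewrite mulfVK ?mulf_neq0 // => ->; by field; rewrite ?hS0 ?hb0.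
- by field; rewrite hS0 hb0.
Qed.

Lemma sum_pos (R : realType) (d : nat) (Q : 'I_d -> R) (I : {set 'I_d}) k :
  (forall i, 0 < Q i) -> k \in I -> 0 < \sum_(j in I) Q j.
Proof.
move=> hQ hk; rewrite (bigD1 k) //=.
apply: (lt_le_trans (hQ k)); rewrite lerDl; apply: sumr_ge0 => j _.
exact: ltW.
Qed.

Lemma sum_scale (R : realType) (d : nat) (Q1 Q2 : 'I_d -> R) (I : {set 'I_d}) b :
  (forall i, i \in I -> Q1 i = b * Q2 i) ->
  \sum_(j in I) Q1 j = b * \sum_(j in I) Q2 j.
Proof. by move=> h; rewrite mulr_sumr; apply: eq_bigr => j /h. Qed.

Arguments sum_scale {R d Q1 Q2 I b}.
Arguments sum_pos {R d Q I} k.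

Theorem proposition1 (R : realType) :
  (* (i) reference sets of size > d/2 give the same hypotheses *)
  (forall (d : nat) (Q1 Q2 : 'I_d -> R) (I1 I2 : {set 'I_d}),
      rel_abund Q1 -> rel_abund Q2 ->
      reference_set Q1 Q2 I1 -> reference_set Q1 Q2 I2 ->
      (d < 2 * #|I1|)%N -> (d < 2 * #|I2|)%N ->
      forall i : 'I_d,
        (null_hyp Q1 Q2 I1 i <-> null_hyp Q1 Q2 I2 i) /\
        (alt_hyp Q1 Q2 I1 i <-> alt_hyp Q1 Q2 I2 i))
  /\
  (* (ii) with reference sets of size <= d/2 the hypotheses may conflict *)
  (forall d : nat, (2 <= d)%N ->
     exists (Q1 Q2 : 'I_d -> R) (I1 I2 : {set 'I_d}) (i : 'I_d),
       rel_abund Q1 /\ rel_abund Q2 /\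
       reference_set Q1 Q2 I1 /\ reference_set Q1 Q2 I2 /\
       (0 < #|I1|)%N /\ (2 * #|I1| <= d)%N /\
       (0 < #|I2|)%N /\ (2 * #|I2| <= d)%N /\
       null_hyp Q1 Q2 I1 i /\ alt_hyp Q1 Q2 I2 i).
Proof.
split.
- move=> d Q1 Q2 I1 I2 [hQ1 _] [hQ2 _] [b1 [hb1 h1]] [b2 [hb2 h2]] c1 c2 i.
  have hU := cardsUI I1 I2.
  have hm : (#|I1 :|: I2| <= d)%N by rewrite -[X in (_ <= X)%N]card_ord max_card.
  have : (0 < #|I1 :&: I2|)%N by lia.
  rewrite card_gt0 => /set0Pn [k]; rewrite inE => /andP [k1 k2].
  have eb : b1 = b2.
    by have := h1 k k1; rewrite h2 // => /(mulIf (lt0r_neq0 (hQ2 k)))->.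
  rewrite -eb in h2.
  have e1 : null_hyp Q1 Q2 I1 i <-> Q1 i = b1 * Q2 i.
    rewrite /null_hyp (sum_scale h1); apply: key => //; exact: sum_pos k1.
  have e2 : null_hyp Q1 Q2 I2 i <-> Q1 i = b1 * Q2 i.
    rewrite /null_hyp (sum_scale h2); apply: key => //; exact: sum_pos k2.
  split; first by rewrite e1 e2.
  rewrite /alt_hyp; split => H N; apply: H; [apply/e1/e2 | apply/e2/e1]; exact: N.
- case=> [|[|d']] // _.
  pose i0 : 'I_d'.+2 := ord0.
  pose i1 : 'I_d'.+2 := Ordinal (isT : (1 < d'.+2)%N).
  pose n : R := (d'.+2)%:R.
  have hn : 0 < n by rewrite ltr0n.
  exists (fun _ => 1 / n), (fun j => (1 + (j == i0)%:R) / (n + 1)), [set i0], [set i1], i0.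
  have hn1 : 0 < n + 1 by lra.
  split.
    split => [j|]; first by rewrite divr_gt0.
    rewrite sumr_const card_ord -/n -mulr_natr; field; by rewrite -natrD pnatr_eq0.
  split.
    split => [j|].
      apply: divr_gt0 => //; rewrite ltr_pwDl //.
    rewrite -mulr_suml big_split /= sumr_const card_ord -/n.
    rewrite (bigD1 i0) //= big1 => [|j /negbTE ->] //.
    by rewrite addr0 divff // lt0r_neq0.
  have singref : forall j : 'I_d'.+2, reference_set (fun _ => 1 / n)
      (fun j => (1 + (j == i0)%:R) / (n + 1)) [set j].
    move=> j; exists ((1 / n) / ((1 + (j == i0)%:R) / (n + 1))); split.
      apply: divr_gt0; first by rewrite divr_gt0.
      apply: divr_gt0 => //; rewrite ltr_pwDl //.
    move=> l; rewrite inE => /eqP ->; rewrite mulfVK // gt_eqF //.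
    apply: divr_gt0 => //; rewrite ltr_pwDl //.
  do 2 (split; first exact: singref).
  rewrite !cards1; do 4 (split; first by []).
  rewrite /null_hyp /alt_hyp !big_set1 /=.
  have ne : (i1 == i0) = false by [].
  clearbody n.
  have a0 : 1/n != 0 by apply: lt0r_neq0; rewrite divr_gt0.
  have c0 : (1+1)/(n+1) != 0 by apply: lt0r_neq0; apply: divr_gt0; lra.
  have n10 : n + 1 != 0 by apply: lt0r_neq0.
  split; first by rewrite !divff.
  rewrite divff // addr0 => H.
  have E : (1+1)/(n+1)/(1/(n+1)) = 1+1 :> R by field; rewrite ?n10.
  move: H; rewrite E; lra.
Qed.
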